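(* Let $n\ge2$ and $1\le m,k\le n$. Then $\mathcal{H}_n(m,k)=\mathcal{L}_n(p,p,\ldots,p)$ ($k$ entries) where $0\le p\le n-1$, $p\equiv k-m-1 \pmod n$. Consequently the natural HNN extension $\widehat{H}_n(m,k)$ of $H_n(m,k)$ is isomorphic to the LOG group of the LOG $\Gamma(n;(a_{m-k+1})^k)$ (subscript mod $n$), i.e. the group with presentation \[\langle a_1,\ldots,a_n,t_0,\ldots,t_{k-1}\mid a_{i+1}=t_0^{-1}a_it_0\ (1\le i\le n,\ a_{n+1}=a_1),\ t_{j+1}=a_{m-k+1}^{-1}t_ja_{m-k+1}\ (0\le j\le k-1,\ t_k=a_1)\rangle.\]
   Context: $\mathcal{H}_n(m,k)=\langle x_1,\ldots,x_n\mid x_ix_{i+m}=x_{i+k}\ (1\le i\le n)\rangle$ (subscripts mod $n$) defines the group $H_n(m,k)$; this is the cyclic presentation $\mathcal{G}_n(x_1x_{1+m}x_{1+k}^{-1})$. For $0\le p_0,\ldots,p_{r-1}\le n-1$ and $p_r=-1$, $\mathcal{L}_n(p_0,\ldots,p_{r-1})$ denotes the cyclic presentation $\mathcal{G}_n\big((x_{p_0}x_{p_1+1}\cdots x_{p_{r-1}+(r-1)}x_{p_r+r})(x_{p_0+1}x_{p_1+2}\cdots x_{p_{r-1}+r})^{-1}\big)$, where $\mathcal{G}_n(w)=\langle x_1,\ldots,x_n\mid w,\theta(w),\ldots,\theta^{n-1}(w)\rangle$ with $\theta(x_i)=x_{i+1}$ (subscripts mod $n$). The natural HNN extension of a cyclically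 presented group $G_n(w)$ is $G_n(w)\rtimes_\phi\mathbb{Z}$ where $\phi(x_i)=x_{i+1}$. A LOG group is the group of a LOG presentation $\langle V\mid \tau(e)=\lambda(e)^{-1}\iota(e)\lambda(e)\ (e\in E)\rangle$ of a labelled oriented graph. *)

(* Defs.v *)
(* Finitely presented groups are handled via words and the
   congruence generated by the relators (no quotient types needed). *)
From HB Require Import structures.
From mathcomp Require Import all_boot all_order all_algebra.
Set Implicit Arguments.
Unset Strict Implicit.
Unset Printing Implicit Defensive.
Import Order.TTheory GRing.Theory Num.Theory.

(* A word over generators X: letters (x, false) = x, (x, true) = x^-1. *)
Definition word (X : Type) := seq (X * bool).

Definition winv (X : Type) (w : word X) : word X :=
  rev (map (fun xb => (xb.1, ~~ xb.2)) w).

(* Substitution of words for generators (the homomorphism of free groups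
   determined by images of generators). *)
Definition wsubst (X Y : Type) (f : X -> word Y) (w : word X) : word Y :=
  flatten (map (fun xb => if xb.2 then winv (f xb.1) else f xb.1) w).

(* Equality in the group <X | R>: the congruence on words generated by free
   cancellation and by r = 1 for each relator r. *)
Inductive peq (X : Type) (R : word X -> Prop) : word X -> word X -> Prop :=
| peq_refl u : peq R u u
| peq_sym u v : peq R u v -> peq R v u
| peq_trans u v w : peq R u v -> peq R v w -> peq R u w
| peq_cat u u' v v' : peq R u u' -> peq R v v' -> peq R (u ++ v) (u' ++ v')
| peq_cancel x b : peq R [:: (x, b); (x, ~~ b)] [::]
| peq_rel r : R r -> peq R r [::].

Definition pres_iso (X Y : Type) (RX : word X -> Prop) (RY : word Y -> Prop) :
  Prop :=
  exists (f : X -> word Y) (g : Y -> word X),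
    [/\ (forall r, RX r -> peq RY (wsubst f r) [::]),
        (forall r, RY r -> peq RX (wsubst g r) [::]),
        (forall x, peq RX (wsubst g (f x)) [:: (x, false)]) &
        (forall y, peq RY (wsubst f (g y)) [:: (y, false)])].

(* Generator index type {x_1,...,x_n}; for n >= 1 it has exactly n elements.
   Subscripts are taken mod n: x_i is gidx n element (i mod n). *)
Definition gidx (n : nat) := 'I_n.-1.+1.

Definition zidx (n : nat) (i : int) : gidx n :=
  @inord n.-1 (absz (i %% (Posz n))%Z).

Definition wshift (n i : nat) (w : word (gidx n)) : word (gidx n) :=
  wsubst (fun j : gidx n => [:: (zidx n (Posz (nat_of_ord j) + Posz i), false)]) w.

(* relators of G_n(w) = <x_1..x_n | w, theta(w), ..., theta^{n-1}(w)> *)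
Definition cyc_rel (n : nat) (w : word (gidx n)) : word (gidx n) -> Prop :=
  fun r => exists i : nat, i < n /\ r = wshift i w.

Definition H_word (n m k : nat) : word (gidx n) :=
  [:: (zidx n 1, false); (zidx n (1 + Posz m), false);
      (zidx n (1 + Posz k), true)].

(* (x_{p_0} x_{p_1+1} ... x_{p_{r-1}+(r-1)} x_{p_r+r}) (x_{p_0+1} ... x_{p_{r-1}+r})^{-1}
   with p_r = -1. *)
Definition L_word (n : nat) (ps : seq nat) : word (gidx n) :=
  let r := size ps in
  mkseq (fun j => (zidx n (Posz (nth 0 ps j) + Posz j), false)) r
  ++ [:: (zidx n (Posz r - 1), false)]
  ++ winv (mkseq (fun j => (zidx n (Posz (nth 0 ps j) + Posz j + 1), false)) r).

(* Given <X | R> and an automorphism phi given on generators, the semidirect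
   product with Z is <X, t | R, t x t^{-1} = phi(x) (x in X)>; t is None. *)
Definition liftw (X : Type) (w : word X) : word (option X) :=
  map (fun xb => (Some xb.1, xb.2)) w.

Definition hnn_rel (X : Type) (R : word X -> Prop) (phi : X -> word X) :
  word (option X) -> Prop :=
  fun r => (exists r0, R r0 /\ r = liftw r0) \/
           (exists x, r = [:: (None, false); (Some x, false); (None, true)]
                          ++ winv (liftw (phi x))).

Definition cyc_shift (n : nat) (j : gidx n) : word (gidx n) :=
  [:: (zidx n (Posz (nat_of_ord j) + 1), false)].

(* <V | tau(e) = lambda(e)^{-1} iota(e) lambda(e), e in E>; relator
   lambda(e)^{-1} iota(e) lambda(e) tau(e)^{-1}. *)
Definition log_rel (V E : Type) (iota tau lam : E -> V) : word V -> Prop :=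
  fun r => exists e : E,
    r = [:: (lam e, true); (iota e, false); (lam e, false); (tau e, true)].

(* The LOG Gamma(n; (a_{m-k+1})^k): vertices a_1..a_n (inl), t_0..t_{k-1} (inr);
   edges: a_i -> a_{i+1} labelled t_0 (inl i), and t_j -> t_{j+1} labelled
   a_{m-k+1} (inr j), with t_k = a_1. *)
Definition logV (n k : nat) := (gidx n + gidx k)%type.

Definition log_iota (n k : nat) (e : logV n k) : logV n k := e.

Definition log_tau (n k : nat) (e : logV n k) : logV n k :=
  match e with
  | inl i => inl (zidx n (Posz (nat_of_ord i) + 1))
  | inr j => if (nat_of_ord j).+1 < k then inr (zidx k (Posz (nat_of_ord j) + 1))
             else inl (zidx n 1)
  end.

Definition log_lam (n m k : nat) (e : logV n k) : logV n k :=
  match e with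
  | inl _ => inr (zidx k 0)
  | inr _ => inl (zidx n (Posz m - Posz k + 1))
  end.

(* Main.v *)
Require Import Defs.
From HB Require Import structures.
From mathcomp Require Import all_boot all_order all_algebra.
From mathcomp Require Import zify ring.
From Stdlib Require Import Setoid Morphisms.
Set Implicit Arguments. Unset Strict Implicit. Unset Printing Implicit Defensive.
Import Order.TTheory GRing.Theory Num.Theory.

Module MG.

Add Parametric Relation (X : Type) (R : word X -> Prop) : (word X) (peq R)
  reflexivity proved by (@peq_refl X R)
  symmetry proved by (@peq_sym X R)
  transitivity proved by (@peq_trans X R) as peq_setoid.

Add Parametric Morphism (X : Type) (R : word X -> Prop) : (@cat (X * bool))
  with signature (peq R) ==> (peq R) ==> (peq R) as cat_mor.
Proof. by move=> u u' H v v' H'; apply: peq_cat. Qed.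

Lemma winv_cat X (u v : word X) : winv (u ++ v) = winv v ++ winv u.
Proof. by rewrite /winv map_cat rev_cat. Qed.

Lemma winvK X (w : word X) : winv (winv w) = w.
Proof.
rewrite /winv map_rev revK -map_comp -[RHS]map_id.
by apply: eq_map => -[x b] /=; rewrite negbK.
Qed.

Lemma winv_cons X (a : X * bool) w : winv (a :: w) = winv w ++ [:: (a.1, ~~ a.2)].
Proof. by rewrite -cat1s winv_cat. Qed.

Lemma wsubst_cat X Y (f : X -> word Y) u v : wsubst f (u ++ v) = wsubst f u ++ wsubst f v.
Proof. by rewrite /wsubst map_cat flatten_cat. Qed.

Lemma wsubst_cons X Y (f : X -> word Y) a w :
  wsubst f (a :: w) = (if a.2 then winv (f a.1) else f a.1) ++ wsubst f w.
Proof. by []. Qed.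

Lemma wsubst_winv X Y (f : X -> word Y) w : wsubst f (winv w) = winv (wsubst f w).
Proof.
elim: w => [|a w IH] //; rewrite winv_cons wsubst_cat IH wsubst_cons winv_cat.
rewrite /wsubst /= cats0; by case: a.2; rewrite ?winvK.
Qed.

Section PeqGen.
Variables (X : Type) (R : word X -> Prop).
Local Notation "u ~ v" := (peq R u v) (at level 70).

Lemma inv_r w : (w ++ winv w) ~ [::].
Proof.
elim: w => [|a w IH]; first reflexivity.
rewrite winv_cons -cat1s catA -(catA [:: a]) IH cats0.
case: a => x b /=. exact: peq_cancel.
Qed.

Lemma inv_l w : (winv w ++ w) ~ [::].
Proof. by have := inv_r (winv w); rewrite winvK. Qed.

Lemma solve_r u v : (u ++ v) ~ [::] -> u ~ winv v.
Proof.
move=> H. rewrite -[u]cats0 -(inv_r v) catA H; reflexivity.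
Qed.

Lemma rel0 r : R r -> r ~ [::].
Proof. exact: peq_rel. Qed.

Lemma peq_inv u v : u ~ v -> winv u ~ winv v.
Proof.
move=> H. rewrite -[winv u]cats0 -(inv_r v) -{1}H catA inv_l; reflexivity.
Qed.
End PeqGen.

Lemma peq_subst X Y (RX : word X -> Prop) (RY : word Y -> Prop) (f : X -> word Y) :
  (forall r, RX r -> peq RY (wsubst f r) [::]) ->
  forall u v, peq RX u v -> peq RY (wsubst f u) (wsubst f v).
Proof.
move=> Hf u v; elim => {u v}.
- reflexivity.
- by move=> u v _ H; symmetry.
- by move=> u v w _ H1 _ H2; rewrite H1.
- by move=> u u' v v' _ H1 _ H2; rewrite !wsubst_cat H1 H2; reflexivity.
- move=> x b; case: b; rewrite /wsubst /=.
  + rewrite cats0; exact: inv_l.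
  + by rewrite cats0; exact: inv_r.
- by move=> r Hr; apply: Hf.
Qed.

Section Canc.
Variables (X : Type) (R : word X -> Prop).
Lemma canc_tf x : peq R [:: (x, true); (x, false)] [::].
Proof. exact: (peq_cancel R x true). Qed.
Lemma canc_ft x : peq R [:: (x, false); (x, true)] [::].
Proof. exact: (peq_cancel R x false). Qed.
Lemma peq_ctx a b u v : peq R u v -> peq R (a ++ u ++ b) (a ++ v ++ b).
Proof. by move=> H; rewrite H; reflexivity. Qed.
Lemma solve_l u v : peq R (u ++ v) [::] -> peq R v (winv u).
Proof.
move=> H. rewrite -[v]cat0s -(inv_l R u) -catA H cats0; reflexivity.
Qed.
End Canc.

Lemma wsubst1 X Y (f : X -> word Y) x : wsubst f [:: (x, false)] = f x.
Proof. by rewrite /wsubst /= cats0. Qed.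
Lemma wsubst1i X Y (f : X -> word Y) x : wsubst f [:: (x, true)] = winv (f x).
Proof. by rewrite /wsubst /= cats0. Qed.
Lemma winv2 X (a b : X * bool) : winv [:: a; b] = [:: (b.1, ~~ b.2); (a.1, ~~ a.2)].
Proof. by []. Qed.

Add Parametric Morphism (X : Type) (R : word X -> Prop) : (@winv X)
  with signature (peq R) ==> (peq R) as winv_mor.
Proof. by move=> u v H; apply: peq_inv. Qed.

Add Parametric Morphism (X : Type) (R : word X -> Prop) : (@cons (X * bool))
  with signature (@eq (X * bool)) ==> (peq R) ==> (peq R) as cons_mor.
Proof.
move=> a u v H; change (peq R ([:: a] ++ u) ([:: a] ++ v)); rewrite H; reflexivity.
Qed.

Lemma nseqSr (A : Type) (a : A) s : nseq s.+1 a = nseq s a ++ [:: a].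
Proof. by elim: s => //= s <-. Qed.
Lemma nseq_swap (A : Type) (a : A) s w : nseq s a ++ a :: w = a :: nseq s a ++ w.
Proof. by rewrite -cat1s catA -nseqSr. Qed.
Lemma winv_nseq (X : Type) (g : X) b s : winv (nseq s (g, b)) = nseq s (g, ~~ b).
Proof. by rewrite /winv map_nseq rev_nseq. Qed.

Section Moves.
Variables (X : Type) (R : word X -> Prop).
Local Notation "u ~ v" := (peq R u v) (at level 70).

Lemma cc1 (g : X) b w : ((g, b) :: (g, ~~ b) :: w) ~ w.
Proof.
change (([:: (g, b); (g, ~~ b)]) ++ w ~ w); rewrite (peq_cancel R g b); reflexivity.
Qed.
Lemma cc2 (g : X) b w : ((g, ~~ b) :: (g, b) :: w) ~ w.
Proof. have := cc1 g (~~ b) w; by rewrite negbK. Qed.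
Lemma cc1f (g : X) w : ((g, false) :: (g, true) :: w) ~ w.
Proof. exact: cc1 g false w. Qed.
Lemma cc1t (g : X) w : ((g, true) :: (g, false) :: w) ~ w.
Proof. exact: cc1 g true w. Qed.

Lemma nseq_cc (g : X) b s w : (nseq s (g, b) ++ nseq s (g, ~~ b) ++ w) ~ w.
Proof.
elim: s w => [|s IH] w; first reflexivity.
rewrite nseqSr -catA /= cc1; exact: IH.
Qed.
Lemma nseq_cc2 (g : X) b s w : (nseq s (g, ~~ b) ++ nseq s (g, b) ++ w) ~ w.
Proof. have := nseq_cc g (~~ b) s w; by rewrite negbK. Qed.
End Moves.

Section Moves2.
Variables (X : Type) (R : word X -> Prop).
Local Notation "u ~ v" := (peq R u v) (at level 70).

Lemma move_of_conj (x y z : X) bx b :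
  (forall w, ((x, bx) :: (y, b) :: (x, ~~ bx) :: w) ~ ((z, b) :: w)) ->
  forall w, ((x, bx) :: (y, b) :: w) ~ ((z, b) :: (x, bx) :: w).
Proof.
move=> H w; transitivity ((x, bx) :: (y, b) :: (x, ~~ bx) :: (x, bx) :: w).
  by rewrite cc2; reflexivity.
exact: H.
Qed.

Lemma move_inv (x y z : X) bx b :
  (forall w, ((x, bx) :: (y, b) :: w) ~ ((z, b) :: (x, bx) :: w)) ->
  forall w, ((x, bx) :: (y, ~~ b) :: w) ~ ((z, ~~ b) :: (x, bx) :: w).
Proof.
move=> H w; transitivity ((z, ~~ b) :: (z, b) :: (x, bx) :: (y, ~~ b) :: w).
  by rewrite cc2; reflexivity.
by rewrite -H cc1; reflexivity.
Qed.

Lemma move_rev (x : X) bx (y z : X * bool) :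
  (forall w, ((x, bx) :: y :: w) ~ (z :: (x, bx) :: w)) ->
  forall w, ((x, ~~ bx) :: z :: w) ~ (y :: (x, ~~ bx) :: w).
Proof.
move=> H w; symmetry; transitivity ((x, ~~ bx) :: (x, bx) :: y :: (x, ~~ bx) :: w).
  by rewrite cc2; reflexivity.
by rewrite H cc1; reflexivity.
Qed.

Lemma comm_blk (x y : X * bool) (B : word X) :
  (forall w, (x :: B ++ w) ~ (B ++ y :: w)) ->
  forall s w, (nseq s x ++ B ++ w) ~ (B ++ nseq s y ++ w).
Proof.
move=> H; elim=> [|s IH] w; first reflexivity.
rewrite /= IH; exact: H.
Qed.

Lemma pw1 (x : X * bool) (a : int -> X * bool) (d : int) :
  (forall i w, (x :: a i :: w) ~ (a (i + d)%R :: x :: w)) ->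
  forall s i w, (nseq s x ++ a i :: w) ~ (a (i + Posz s * d)%R :: nseq s x ++ w).
Proof.
move=> H; elim=> [|s IH] i w.
  by rewrite mul0r addr0; reflexivity.
rewrite /= IH H (_ : (i + Posz s * d + d = i + Posz s.+1 * d)%R); [reflexivity | lia].
Qed.

Lemma pwr (x : X * bool) (a : int -> X * bool) (d : int) :
  (forall i w, (x :: a i :: w) ~ (a (i + d)%R :: x :: w)) ->
  forall r s i w, (nseq s x ++ nseq r (a i) ++ w) ~ (nseq r (a (i + Posz s * d)%R) ++ nseq s x ++ w).
Proof.
move=> H; elim=> [|r IH] s i w; first reflexivity.
rewrite /= (pw1 H) IH; reflexivity.
Qed.
End Moves2.

Lemma rel_prefix X (R : word X -> Prop) u : peq R u [::] -> forall w, peq R (u ++ w) w.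
Proof. by move=> H w; rewrite H; reflexivity. Qed.

Lemma wsubst_nseqF X Y (f : X -> word Y) g s : wsubst f (nseq s (g, false)) = flatten (nseq s (f g)).
Proof. by elim: s => //= s IH; rewrite -IH. Qed.
Lemma wsubst_nseqT X Y (f : X -> word Y) g s : wsubst f (nseq s (g, true)) = flatten (nseq s (winv (f g))).
Proof. by elim: s => //= s IH; rewrite -IH. Qed.
Lemma flatten_nseq1 A (a : A) s : flatten (nseq s [:: a]) = nseq s a.
Proof. by elim: s => //= s ->. Qed.
Lemma flat_peq X (R : word X -> Prop) u v : (forall w, peq R (u ++ w) (v ++ w)) ->
  forall s w, peq R (flatten (nseq s u) ++ w) (flatten (nseq s v) ++ w).
Proof.
move=> H; elim=> [|s IH] w; first reflexivity.
by rewrite /= -!catA IH H; reflexivity.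
Qed.
Lemma nseq_ccF X (R : word X -> Prop) (g : X) s w : peq R (nseq s (g, false) ++ nseq s (g, true) ++ w) w.
Proof. exact: nseq_cc R g false s w. Qed.
Lemma nseq_ccT X (R : word X -> Prop) (g : X) s w : peq R (nseq s (g, true) ++ nseq s (g, false) ++ w) w.
Proof. exact: nseq_cc R g true s w. Qed.
Lemma nseq_ccF0 X (R : word X -> Prop) (g : X) s : peq R (nseq s (g, false) ++ nseq s (g, true)) [::].
Proof. have := nseq_ccF R g s [::]; by rewrite cats0. Qed.
Lemma nseq_ccT0 X (R : word X -> Prop) (g : X) s : peq R (nseq s (g, true) ++ nseq s (g, false)) [::].
Proof. have := nseq_ccT R g s [::]; by rewrite cats0. Qed.

End MG.
Import MG.

Module MI.
Local Open Scope ring_scope.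

Section Idx.
Variable n : nat.
Hypothesis hn : (0 < n)%N.

Lemma zidx_mod (a b : int) : (a = b %[mod n])%Z -> zidx n a = zidx n b.
Proof. by rewrite /zidx => ->. Qed.

Lemma val_zidx (a : int) : Posz (nat_of_ord (zidx n a)) = (a %% n)%Z.
Proof.
rewrite /zidx inordK.
  by rewrite gez0_abs // modz_ge0 // eqz_nat -lt0n.
have h1 : (0 <= a %% n)%Z by rewrite modz_ge0 // eqz_nat -lt0n.
have h2 : (a %% n < n)%Z by rewrite ltz_pmod // ltz_nat.
rewrite prednK //. move: h1 h2; case: (a %% n)%Z => // q _.
Qed.

Lemma val_zidx_mod (a : int) : (Posz (nat_of_ord (zidx n a)) = a %[mod n])%Z.
Proof. by rewrite val_zidx modz_mod. Qed.

Lemma zidx_val (y : 'I_n.-1.+1) : zidx n (Posz (nat_of_ord y)) = y.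
Proof.
apply: val_inj; rewrite /zidx /= modz_small ?inordK //=.
by case: y => /= y; rewrite prednK.
Qed.

End Idx.

Section Idx2.
Variable n : nat.
Hypothesis hn : (0 < n)%N.
Lemma eqmodP (a b c : int) : a = b + c * n -> (a = b %[mod n])%Z.
Proof. move=> ->. by rewrite addrC modzMDl. Qed.
Lemma zidxE (c a b : int) : a = b + c * n -> zidx n a = zidx n b.
Proof. by move=> H; apply: zidx_mod; apply: eqmodP H. Qed.
Lemma val_zidxE a : Posz (nat_of_ord (zidx n a)) = a - (a %/ n)%Z * n.
Proof. have := divz_eq a n; rewrite val_zidx //; lia. Qed.
Lemma zidx_shift a b : zidx n (Posz (nat_of_ord (zidx n a)) + b) = zidx n (a + b).
Proof. apply: (zidxE (c := - (a %/ n)%Z)); rewrite val_zidxE; lia. Qed.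
Lemma zidx_lt a : (nat_of_ord (zidx n a) < n)%N.
Proof. have := ltn_ord (zidx n a); by case: n hn. Qed.
End Idx2.

End MI.
Import MI.

Module MP1.
Local Open Scope ring_scope.

Section Letters.
Variable n : nat.
Hypothesis hn : (0 < n)%N.
Definition lx (j : int) : gidx n * bool := (zidx n j, false).
Definition lxi (j : int) : gidx n * bool := (zidx n j, true).
Definition P (j : int) (s : nat) : word (gidx n) := mkseq (fun t => lx (j + Posz t)) s.

Lemma P_S (j : int) s : P j s.+1 = P j s ++ [:: lx (j + s)].
Proof. by rewrite /P mkseqS cats1. Qed.

Lemma P_mod (c a b : int) s : a = b + c * n -> P a s = P b s.
Proof. move=> H; apply: eq_mkseq => t; rewrite /lx; congr pair; apply: (zidxE (c := c)); lia. Qed.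

Lemma lx_mod (c a b : int) : a = b + c * n -> lx a = lx b.
Proof. by move=> H; rewrite /lx (zidxE H). Qed.
Lemma lxi_mod (c a b : int) : a = b + c * n -> lxi a = lxi b.
Proof. by move=> H; rewrite /lxi (zidxE H). Qed.

Lemma wshift_lx i a : wshift i [:: lx a] = [:: lx (a + Posz i)].
Proof. by rewrite /wshift /wsubst /= zidx_shift. Qed.

Lemma wshift_lxi i a : wshift i [:: lxi a] = [:: lxi (a + Posz i)].
Proof. by rewrite /wshift /wsubst /= zidx_shift. Qed.

Lemma wshift_cat i (u v : word (gidx n)) : wshift i (u ++ v) = wshift i u ++ wshift i v.
Proof. exact: wsubst_cat. Qed.
Lemma wshift_winv i (u : word (gidx n)) : wshift i (winv u) = winv (wshift i u).
Proof. exact: wsubst_winv. Qed.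

Lemma wshift_P i j s : wshift i (P j s) = P (j + Posz i) s.
Proof.
elim: s => [|s IH]; first by [].
rewrite !P_S wshift_cat IH wshift_lx; congr (_ ++ [:: lx _]); lia.
Qed.
End Letters.

Section HPart.
Variables n m k : nat.
Hypothesis hn : (0 < n)%N.
Local Notation RH := (cyc_rel (H_word n m k)).
Local Notation X := (lx n).
Local Notation XI := (lxi n).

Lemma wshift_H i : wshift i (H_word n m k) =
  [:: X (1 + Posz i); X (1 + Posz i + m); XI (1 + Posz i + k)].
Proof.
rewrite /wshift /H_word /wsubst /= !zidx_shift //.
rewrite /lx /lxi; congr [:: (zidx n _, _); (zidx n _, _); (zidx n _, _)]; lia.
Qed.

Lemma Hrel_inv r : RH r -> exists j, r = [:: X j; X (j + m); XI (j + k)].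
Proof. by case=> i [_ ->]; exists (1 + Posz i); rewrite wshift_H. Qed.

Lemma Hrel (j : int) : RH [:: X j; X (j + m); XI (j + k)].
Proof.
exists (nat_of_ord (zidx n (j - 1))); split; first exact: zidx_lt.
rewrite wshift_H val_zidxE //.
rewrite /lx /lxi; congr [:: (_, _); (_, _); (_, _)];
  apply: (zidxE (c := ((j - 1) %/ n)%Z)); lia.
Qed.

Lemma Hrel0 (j : int) : peq RH [:: X j; X (j + m); XI (j + k)] [::].
Proof. exact: rel0 (Hrel j). Qed.

Lemma canc_X (R : word (gidx n) -> Prop) j : peq R [:: X j; XI j] [::].
Proof. exact: canc_ft. Qed.
Lemma canc_XI (R : word (gidx n) -> Prop) j : peq R [:: XI j; X j] [::].
Proof. exact: canc_tf. Qed.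

Lemma H1 (j : int) : peq RH [:: XI j; X (j + k)] [:: X (j + m)].
Proof.
have h : peq RH [:: X j; X (j + m)] [:: X (j + k)] :=
  solve_r (u := [:: X j; X (j + m)]) (v := [:: XI (j + k)]) (Hrel0 j).
transitivity ([:: XI j] ++ [:: X j; X (j + m)]).
  by change (peq RH ([:: XI j] ++ [:: X (j + k)]) ([:: XI j] ++ [:: X j; X (j + m)]));
     rewrite h; reflexivity.
change (peq RH ([:: XI j; X j] ++ [:: X (j + m)]) [:: X (j + m)]).
by rewrite canc_XI; reflexivity.
Qed.

Lemma H2 (j : int) : peq RH [:: X (j + m); XI (j + k)] [:: XI j].
Proof.
have h : peq RH [:: X (j + m); XI (j + k)] (winv [:: X j]) :=
  solve_l (u := [:: X j]) (v := [:: X (j + m); XI (j + k)]) (Hrel0 j).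
exact: h.
Qed.

End HPart.

Section Part1.
Variables n m k p : nat.
Hypothesis hn : (0 < n)%N.
Hypothesis hp : (Posz p = Posz k - Posz m - 1 %[mod Posz n])%Z.

Definition cp : int := ((Posz p %/ n)%Z - ((Posz k - Posz m - 1) %/ n)%Z).
Lemma hpE : Posz p = Posz k - Posz m - 1 + cp * n.
Proof.
have h1 := divz_eq (Posz p) n; have h2 := divz_eq (Posz k - Posz m - 1) n.
rewrite hp in h1; rewrite /cp; lia.
Qed.

Local Notation RH := (cyc_rel (H_word n m k)).
Local Notation RL := (cyc_rel (L_word n (nseq k p))).
Local Notation X := (lx n).
Local Notation XI := (lxi n).
Local Notation PP := (P n).

Lemma Lword_eq : L_word n (nseq k p) = PP p k ++ [:: X (Posz k - 1)] ++ winv (PP (Posz p + 1) k).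
Proof.
rewrite /L_word size_nseq /P /mkseq; congr (_ ++ _ ++ winv _).
- apply/eq_in_map => t; rewrite mem_iota => /andP[_ ht]; by rewrite nth_nseq ht.
- apply/eq_in_map => t; rewrite mem_iota => /andP[_ ht]; rewrite nth_nseq ht.
  rewrite /lx /=. congr (zidx n _, _); lia.
Qed.

Lemma wshift_L i : wshift i (L_word n (nseq k p)) =
  PP (Posz p + i) k ++ [:: X (Posz k - 1 + i)] ++ winv (PP (Posz p + 1 + i) k).
Proof. by rewrite Lword_eq !wshift_cat wshift_winv !wshift_P // wshift_lx. Qed.

Lemma Lrel_inv r : RL r -> exists j, r = PP j k ++ [:: X (j + m)] ++ winv (PP (j + 1) k).
Proof.
case=> i [_ ->]; exists (Posz p + i); rewrite wshift_L.
congr (_ ++ [:: _] ++ winv _).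
- apply: (@lx_mod n (- cp)); have := hpE; lia.
- apply: (@P_mod n hn 0); lia.
Qed.

Lemma Lrel (j : int) : RL (PP j k ++ [:: X (j + m)] ++ winv (PP (j + 1) k)).
Proof.
exists (nat_of_ord (zidx n (j - Posz p))); split; first exact: zidx_lt.
rewrite wshift_L val_zidxE //.
set q := (_ %/ _)%Z.
congr (_ ++ [:: _] ++ winv _).
- apply: (@P_mod n hn q); lia.
- apply: (@lx_mod n (q + cp)); have := hpE; lia.
- apply: (@P_mod n hn q); lia.
Qed.

Lemma Lstep (j : int) : peq RL (PP j k ++ [:: X (j + m)]) (PP (j + 1) k).
Proof.
have h := rel0 (Lrel j); rewrite catA in h.
by have := solve_r h; rewrite winvK.
Qed.

Lemma Lpow (j : int) s : peq RL (PP j k ++ PP (j + m) s) (PP (j + Posz s) k).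
Proof.
elim: s => [|s IH].
  by rewrite cats0 (_ : j + Posz 0 = j); [reflexivity | lia].
rewrite P_S catA IH (_ : X (j + m + Posz s) = X (j + Posz s + m)); last by congr (lx n _); lia.
rewrite Lstep (_ : j + Posz s + 1 = j + Posz s.+1); [reflexivity | lia].
Qed.

Definition gH (y : gidx n) : word (gidx n) := [:: (y, true); lx n (Posz y + 1)].
Definition fL (y : gidx n) : word (gidx n) := PP (Posz y - Posz m) k.

Lemma gH_z a : gH (zidx n a) = [:: XI a; X (a + 1)].
Proof. by rewrite /gH /lx zidx_shift. Qed.
Lemma fL_z a : fL (zidx n a) = PP (a - Posz m) k.
Proof. rewrite /fL; apply: (@P_mod n hn (- (a %/ n)%Z)); rewrite val_zidxE //; lia. Qed.

Lemma gP (R : word (gidx n) -> Prop) j s : peq R (wsubst gH (PP j s)) [:: XI j; X (j + Posz s)].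
Proof.
elim: s => [|s IH].
  rewrite (_ : j + Posz 0 = j); last lia. symmetry; exact: canc_XI.
rewrite P_S wsubst_cat IH wsubst1 gH_z.
change (peq R ([:: XI j] ++ [:: X (j + Posz s); XI (j + Posz s)] ++ [:: X (j + Posz s + 1)])
  [:: XI j; X (j + Posz s.+1)]).
rewrite canc_X (_ : j + Posz s + 1 = j + Posz s.+1); [reflexivity | lia].
Qed.

Lemma part1 : pres_iso RH RL.
Proof.
exists fL, gH; split.
- move=> r /(@Hrel_inv n m k hn) [j ->].
  rewrite !wsubst_cons /= cats0 !fL_z.
  rewrite (@P_mod n hn 0 (j + m - Posz m) (j - Posz m + m)); last lia.
  rewrite catA Lpow (@P_mod n hn 0 (j - Posz m + k) (j + k - Posz m)); last lia.
  exact: inv_r.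
- move=> r /Lrel_inv [j ->].
  rewrite !wsubst_cat wsubst_winv wsubst1 !gP gH_z winv2 /=.
  change (peq RH ([:: XI j; X (j + k)] ++ [:: XI (j + m); X (j + m + 1)] ++
                   [:: XI (j + 1 + k); X (j + 1)]) [::]).
  rewrite (@H1 n m k hn).
  change (peq RH ([:: X (j + m); XI (j + m)] ++ [:: X (j + m + 1); XI (j + 1 + k)] ++
                   [:: X (j + 1)]) [::]).
  rewrite canc_X (_ : X (j + m + 1) = X (j + 1 + m)); last by congr (lx n _); lia.
  rewrite (@H2 n m k hn (j + 1)) cat0s; exact: canc_XI.
- move=> y; rewrite /fL gP.
  rewrite (@H1 n m k hn) (_ : Posz y - Posz m + Posz m = Posz y); last lia.
  rewrite /lx (zidx_val hn); reflexivity.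
- move=> y; rewrite /gH wsubst_cons /= wsubst1 -/(fL y).
  rewrite fL_z /fL (@P_mod n hn 0 (Posz y + 1 - Posz m) (Posz y - Posz m + 1)); last lia.
  rewrite -(Lstep (Posz y - Posz m)) (_ : Posz y - Posz m + Posz m = Posz y); last lia.
  rewrite catA inv_l cat0s /lx (zidx_val hn); reflexivity.
Qed.
End Part1.

End MP1.
Import MP1.

Module MP2.
Local Open Scope ring_scope.

Section HNN.
Variables n m k : nat.
Hypothesis hn : (0 < n)%N.

Local Notation RH := (cyc_rel (H_word n m k)).
Local Notation RHH := (hnn_rel (cyc_rel (H_word n m k)) (@cyc_shift n)).
Local Notation XH := (option (gidx n)).
Definition sx (j : int) : XH * bool := (Some (zidx n j), false).
Definition sxi (j : int) : XH * bool := (Some (zidx n j), true).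
Definition tt : XH * bool := (None, false).
Definition tti : XH * bool := (None, true).
Local Notation "u ~ v" := (peq RHH u v) (at level 70).

Lemma HHrel (j : int) w : (sx j :: sx (j + Posz m) :: sxi (j + Posz k) :: w) ~ w.
Proof.
apply: (rel_prefix (u := [:: sx j; sx (j + Posz m); sxi (j + Posz k)])).
apply: rel0; left; exists [:: lx n j; lx n (j + Posz m); lxi n (j + Posz k)]; split.
  exact: (@Hrel n m k hn j).
reflexivity.
Qed.

Lemma HTrel (j : int) w : (tt :: sx j :: tti :: w) ~ (sx (j + 1) :: w).
Proof.
have h : peq RHH [:: tt; sx j; tti; sxi (j + 1)] [::].
  apply: rel0; right; exists (zidx n j).
  by rewrite /cyc_shift zidx_shift.
transitivity (tt :: sx j :: tti :: sxi (j + 1) :: sx (j + 1) :: w).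
  by rewrite cc1t; reflexivity.
exact: (rel_prefix h (sx (j + 1) :: w)).
Qed.

Lemma HH0 (j : int) w : (sx j :: sx (j + Posz m) :: w) ~ (sx (j + Posz k) :: w).
Proof.
transitivity (sx j :: sx (j + Posz m) :: sxi (j + Posz k) :: sx (j + Posz k) :: w).
  by rewrite cc1t; reflexivity.
exact: HHrel.
Qed.

Lemma HH1 (j : int) w : (sxi j :: sx (j + Posz k) :: w) ~ (sx (j + Posz m) :: w).
Proof.
rewrite -HH0 cc1t; reflexivity.
Qed.

Lemma HH3 (j : int) w : (sxi (j + Posz k) :: sx j :: w) ~ (sxi (j + Posz m) :: w).
Proof.
transitivity (sxi (j + Posz k) :: sx j :: sx (j + Posz m) :: sxi (j + Posz m) :: w).
  by rewrite cc1f; reflexivity.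
rewrite HH0 cc1t; reflexivity.
Qed.

Lemma mvT (j : int) w : (tt :: sx j :: w) ~ (sx (j + 1) :: tt :: w).
Proof. exact: (move_of_conj (x := None) (bx := false) (b := false) (HTrel j)). Qed.

Lemma mvTi (j : int) w : (tt :: sxi j :: w) ~ (sxi (j + 1) :: tt :: w).
Proof. exact: (move_inv (x := None) (bx := false) (b := false) (mvT j)). Qed.

Lemma mvti (j : int) w : (tti :: sx j :: w) ~ (sx (j + -1) :: tti :: w).
Proof.
have := move_rev (x := None) (bx := false) (mvT (j + -1)) w.
by rewrite (_ : j + -1 + 1 = j) //; lia.
Qed.

Lemma mvtii (j : int) w : (tti :: sxi j :: w) ~ (sxi (j + -1) :: tti :: w).
Proof.
have := move_rev (x := None) (bx := false) (mvTi (j + -1)) w.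
by rewrite (_ : j + -1 + 1 = j) //; lia.
Qed.

Lemma pwT s (j : int) w : (nseq s tt ++ sx j :: w) ~ (sx (j + Posz s) :: nseq s tt ++ w).
Proof.
have := pw1 (fun i w => mvT i w) s j w; by rewrite mulr1.
Qed.

Lemma pwTi s (j : int) w : (nseq s tti ++ sx j :: w) ~ (sx (j - Posz s) :: nseq s tti ++ w).
Proof.
have := pw1 (fun i w => mvti i w) s j w; by rewrite (_ : j + Posz s * -1 = j - Posz s) //; lia.
Qed.
End HNN.

End MP2.
Import MP2.

Module MP3.
Local Open Scope ring_scope.

Lemma val_zidx_small (k s : nat) : (s < k)%N -> nat_of_ord (zidx k (Posz s)) = s.
Proof.
move=> hs; have hk : (0 < k)%N by case: k hs.
have := val_zidx hk (Posz s); rewrite modz_small; first by case.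
by apply/andP; split => //; rewrite ltz_nat.
Qed.

Section LOG.
Variables n m k : nat.
Hypothesis hn : (0 < n)%N.
Hypothesis hk : (0 < k)%N.

Local Notation RLG := (log_rel (@log_iota n k) (@log_tau n k) (@log_lam n m k)).
Local Notation V := (logV n k).
Definition aa (j : int) : V * bool := (inl (zidx n j), false).
Definition aai (j : int) : V * bool := (inl (zidx n j), true).
Definition tj (j : int) : V * bool := (inr (zidx k j), false).
Definition t0 : V * bool := (inr (zidx k 0), false).
Definition t0i : V * bool := (inr (zidx k 0), true).
Definition a0 : int := Posz m - Posz k + 1.
Definition AK (d : int) := nseq k (aa d).
Definition AKi (d : int) := nseq k (aai d).
Local Notation "u ~ v" := (peq RLG u v) (at level 70).

Lemma aa_mod (c a b : int) : a = b + c * n -> aa a = aa b.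
Proof. by move=> H; rewrite /aa (zidxE H). Qed.
Lemma AK_mod (c a b : int) : a = b + c * n -> AK a = AK b.
Proof. by move=> H; rewrite /AK (aa_mod H). Qed.
Lemma AKi_mod (c a b : int) : a = b + c * n -> AKi a = AKi b.
Proof. by move=> H; rewrite /AKi /aai (zidxE H). Qed.

Lemma LArel (i : int) w : (t0i :: aa i :: t0 :: w) ~ (aa (i + 1) :: w).
Proof.
have h : peq RLG [:: t0i; aa i; t0; aai (i + 1)] [::].
  apply: rel0; exists (inl (zidx n i)).
  by rewrite /log_tau /= zidx_shift.
transitivity (t0i :: aa i :: t0 :: aai (i + 1) :: aa (i + 1) :: w).
  by rewrite cc1t; reflexivity.
exact: (rel_prefix h (aa (i + 1) :: w)).
Qed.

Lemma mvA (i : int) w : (t0i :: aa i :: w) ~ (aa (i + 1) :: t0i :: w).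
Proof. exact: (move_of_conj (bx := true) (b := false) (LArel i)). Qed.
Lemma mvAi (i : int) w : (t0i :: aai i :: w) ~ (aai (i + 1) :: t0i :: w).
Proof. exact: (move_inv (bx := true) (b := false) (mvA i)). Qed.
Lemma mvA' (i : int) w : (t0 :: aa i :: w) ~ (aa (i + -1) :: t0 :: w).
Proof.
have := move_rev (x := inr (zidx k 0)) (bx := true) (mvA (i + -1)) w.
by rewrite (_ : i + -1 + 1 = i) //; lia.
Qed.
Lemma mvAi' (i : int) w : (t0 :: aai i :: w) ~ (aai (i + -1) :: t0 :: w).
Proof.
have := move_rev (x := inr (zidx k 0)) (bx := true) (mvAi (i + -1)) w.
by rewrite (_ : i + -1 + 1 = i) //; lia.
Qed.

Lemma Pt0i_AK s (d : int) w : (nseq s t0i ++ AK d ++ w) ~ (AK (d + Posz s) ++ nseq s t0i ++ w).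
Proof. have := pwr (fun i w => mvA i w) k s d w; by rewrite mulr1. Qed.
Lemma Pt0_AK s (d : int) w : (nseq s t0 ++ AK d ++ w) ~ (AK (d - Posz s) ++ nseq s t0 ++ w).
Proof.
have := pwr (fun i w => mvA' i w) k s d w.
by rewrite (_ : d + Posz s * -1 = d - Posz s) //; lia.
Qed.
Lemma Pt0_AKi s (d : int) w : (nseq s t0 ++ AKi d ++ w) ~ (AKi (d - Posz s) ++ nseq s t0 ++ w).
Proof.
have := pwr (fun i w => mvAi' i w) k s d w.
by rewrite (_ : d + Posz s * -1 = d - Posz s) //; lia.
Qed.
Lemma t0_AK (d : int) w : (t0 :: AK d ++ w) ~ (AK (d - 1) ++ t0 :: w).
Proof. exact: (Pt0_AK 1 d w). Qed.
Lemma t0i_AK (d : int) w : (t0i :: AK d ++ w) ~ (AK (d + 1) ++ t0i :: w).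
Proof. exact: (Pt0i_AK 1 d w). Qed.

Lemma LT (s : nat) w : (s.+1 < k)%N ->
  (aai a0 :: tj (Posz s) :: aa a0 :: w) ~ (tj (Posz s + 1) :: w).
Proof.
move=> hs.
have h : peq RLG [:: aai a0; tj (Posz s); aa a0; (inr (zidx k (Posz s + 1)), true)] [::].
  apply: rel0; exists (inr (zidx k (Posz s))).
  rewrite /log_tau /log_lam /log_iota val_zidx_small ?hs //; last by apply: ltnW.
transitivity (aai a0 :: tj (Posz s) :: aa a0 :: (inr (zidx k (Posz s + 1)), true) :: tj (Posz s + 1) :: w).
  by rewrite cc1t; reflexivity.
exact: (rel_prefix h (tj (Posz s + 1) :: w)).
Qed.

Lemma LTlast w : (aai a0 :: tj (Posz k.-1) :: aa a0 :: w) ~ (aa 1 :: w).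
Proof.
have h : peq RLG [:: aai a0; tj (Posz k.-1); aa a0; aai 1] [::].
  apply: rel0; exists (inr (zidx k (Posz k.-1))).
  rewrite /log_tau /log_lam /log_iota val_zidx_small; last by rewrite prednK.
  by rewrite prednK // ltnn.
transitivity (aai a0 :: tj (Posz k.-1) :: aa a0 :: aai 1 :: aa 1 :: w).
  by rewrite cc1t; reflexivity.
exact: (rel_prefix h (aa 1 :: w)).
Qed.

Lemma TJ (s : nat) w : (s < k)%N ->
  (nseq s (aai a0) ++ t0 :: nseq s (aa a0) ++ w) ~ (tj (Posz s) :: w).
Proof.
elim: s w => [|s IH] w hs; first reflexivity.
rewrite [nseq s.+1 (aa a0)]nseqSr -catA /=.
rewrite (IH (aa a0 :: w)); last by apply: ltnW.
rewrite LT // (_ : Posz s + 1 = Posz s.+1); [reflexivity | lia].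
Qed.

Lemma KL1 w : (AKi a0 ++ t0 :: AK a0 ++ w) ~ (aa 1 :: w).
Proof.
have e1 : forall (A : Type) (x : A), nseq k x = x :: nseq k.-1 x.
  by move=> A x; rewrite -{1}(prednK hk).
have e2 : forall (A : Type) (x : A), nseq k x = nseq k.-1 x ++ [:: x].
  by move=> A x; rewrite -{1}(prednK hk) nseqSr.
rewrite /AKi /AK e1 (e2 _ (aa a0)) -catA /=.
rewrite (TJ (aa a0 :: w)); last by rewrite prednK.
exact: LTlast.
Qed.

Lemma E0 w : (t0 :: AK a0 ++ w) ~ (AK a0 ++ aa (a0 - a0 + 1) :: w).
Proof.
transitivity (AK a0 ++ AKi a0 ++ t0 :: AK a0 ++ w).
  symmetry; exact: (nseq_cc RLG (inl (zidx n a0)) false k).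
rewrite KL1 (_ : a0 - a0 + 1 = 1); [reflexivity | lia].
Qed.

Lemma AKC (d : int) w : (AK (d + 1) ++ w) ~ (t0i :: AK d ++ t0 :: w).
Proof.
rewrite t0i_AK cc1t; reflexivity.
Qed.

Lemma Estep (d : int) : (forall w, (t0 :: AK d ++ w) ~ (AK d ++ aa (d - a0 + 1) :: w)) ->
  forall w, (t0 :: AK (d + 1) ++ w) ~ (AK (d + 1) ++ aa (d + 1 - a0 + 1) :: w).
Proof.
move=> E w; rewrite !AKC cc1f mvA'.
rewrite (_ : d + 1 - a0 + 1 + -1 = d - a0 + 1); last lia.
rewrite -E cc1t; reflexivity.
Qed.

Lemma Eall (d : int) w : (t0 :: AK d ++ w) ~ (AK d ++ aa (d - a0 + 1) :: w).
Proof.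
set s := nat_of_ord (zidx n (d - a0)).
have hs : Posz s = d - a0 - ((d - a0) %/ n)%Z * n by rewrite val_zidxE.
rewrite (@AK_mod ((d - a0) %/ n)%Z d (a0 + Posz s)); last lia.
rewrite (@aa_mod ((d - a0) %/ n)%Z (d - a0 + 1) (a0 + Posz s - a0 + 1)); last lia.
elim: s {hs} w => [|s IH] w.
  rewrite addr0; exact: E0.
rewrite (_ : a0 + Posz s.+1 = a0 + Posz s + 1); last lia.
exact: Estep.
Qed.
End LOG.

End MP3.
Import MP3.

Module MP4.
Local Open Scope ring_scope.

Section Part2.
Variables n m k : nat.
Hypothesis hn : (0 < n)%N.
Hypothesis hk : (0 < k)%N.

Local Notation RH := (cyc_rel (H_word n m k)).
Local Notation RHH := (hnn_rel (cyc_rel (H_word n m k)) (@cyc_shift n)).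
Local Notation RLG := (log_rel (@log_iota n k) (@log_tau n k) (@log_lam n m k)).
Local Notation SX := (sx n).
Local Notation SXI := (sxi n).
Local Notation TT := (tt n).
Local Notation TTI := (tti n).
Local Notation A := (aa n k).
Local Notation AI := (aai n k).
Local Notation T0 := (t0 n k).
Local Notation T0I := (t0i n k).
Local Notation AKn := (AK n k).
Local Notation AKin := (AKi n k).
Local Notation A0 := (a0 m k).

Definition c0 : int := Posz m + Posz m - Posz k + 1.
Definition Gm (x : option (gidx n)) : word (logV n k) :=
  if x is Some y then AKn (c0 - Posz y) ++ nseq k T0I else [:: T0].
Definition Fr (j : nat) : word (option (gidx n)) :=
  SXI 0 :: nseq j TTI ++ [:: SX 0; TT; SXI 0] ++ nseq j TT ++ [:: SX 0].
Definition Fm (v : logV n k) : word (option (gidx n)) :=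
  match v with
  | inl y => [:: SXI (A0 - Posz y); TT; SX (A0 - Posz y)]
  | inr j => Fr j
  end.

Lemma SX_mod (c a b : int) : a = b + c * n -> SX a = SX b.
Proof. by move=> H; rewrite /sx (zidxE H). Qed.
Lemma SXI_mod (c a b : int) : a = b + c * n -> SXI a = SXI b.
Proof. by move=> H; rewrite /sxi (zidxE H). Qed.

Lemma Gm_z a : Gm (Some (zidx n a)) = AKn (c0 - a) ++ nseq k T0I.
Proof.
rewrite /Gm (@AK_mod n k (a %/ n)%Z _ (c0 - a)) //.
rewrite val_zidxE //; lia.
Qed.

Lemma AK_z a : AKn (c0 - Posz (nat_of_ord (zidx n a))) = AKn (c0 - a).
Proof. by have := Gm_z a; rewrite /Gm => /eqP; rewrite eqseq_cat ?size_nseq // => /andP[/eqP]. Qed.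

Lemma wsubst_nil X Y (f : X -> word Y) : wsubst f [::] = [::].
Proof. by []. Qed.

Lemma Fl_z a : Fm (inl (zidx n a)) = [:: SXI (A0 - a); TT; SX (A0 - a)].
Proof.
rewrite /Fm (@SX_mod (a %/ n)%Z _ (A0 - a)) ?(@SXI_mod (a %/ n)%Z _ (A0 - a)) //;
  rewrite val_zidxE //; lia.
Qed.

Lemma Fr_z (s : nat) : (s < k)%N -> Fm (inr (zidx k (Posz s))) = Fr s.
Proof. by move=> hs; rewrite /Fm val_zidx_small. Qed.

Lemma winv_AK d : winv (AKn d) = AKin d.
Proof. exact: winv_nseq. Qed.

Lemma AKi_z a : AKin (c0 - Posz (nat_of_ord (zidx n a))) = AKin (c0 - a).
Proof. rewrite -!winv_AK; congr winv; exact: AK_z. Qed.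

Lemma eAll d w : peq RLG (T0 :: AKn d ++ w) (AKn d ++ A (d - A0 + 1) :: w).
Proof. exact: (@Eall n m k hn hk d w). Qed.

Lemma KeyK c w : peq RLG (nseq k T0 ++ AKn c ++ w) (AKn c ++ AKn (c - A0 + 1) ++ w).
Proof. exact: (comm_blk (fun w => eAll c w) k w). Qed.

Lemma GC d w : peq RLG (nseq k T0 ++ AKin d ++ T0 :: AKn d ++ nseq k T0I ++ w)
                       (A (d - Posz k - A0 + 1) :: w).
Proof.
rewrite (@Pt0_AKi n m k hn hk) nseq_swap (@Pt0_AK n m k hn hk) (nseq_ccF RLG).
rewrite eAll (nseq_ccT RLG); reflexivity.
Qed.

Lemma G1 r : RHH r -> peq RLG (wsubst Gm r) [::].
Proof.
case=> [[r0 [/(@Hrel_inv n m k hn) [j ->] ->]] | [x ->]].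
  rewrite /liftw /= !wsubst_cons /= wsubst_nil cats0 !AK_z winv_cat winv_AK winv_nseq /=.
  rewrite -!catA (nseq_ccT RLG) (@Pt0i_AK n m k hn).
  rewrite (_ : c0 - (j + Posz m) + Posz k = (c0 - j) - A0 + 1); last by rewrite /c0 /a0; lia.
  rewrite -KeyK (@Pt0_AK n m k hn hk).
  rewrite (_ : c0 - (j + Posz k) = c0 - j - Posz k); last lia.
  rewrite (nseq_ccF RLG); exact: nseq_ccF0.
- rewrite wsubst_cat wsubst_winv /cyc_shift /liftw /= wsubst1.
  rewrite winv_cat winv_AK winv_nseq /= -!catA nseq_swap (nseq_ccT RLG).
  rewrite (_ : c0 - Posz x = (c0 - (Posz x + 1)) + 1); last lia.
  rewrite AKi_z (@t0_AK n m k hn hk) cc1f.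
  rewrite (_ : c0 - (Posz x + 1) + 1 - 1 = c0 - (Posz x + 1)); last lia.
  exact: nseq_ccF0.
Qed.
Lemma Fr0 w : peq RHH (Fr 0 ++ w) (TT :: w).
Proof. rewrite /Fr /= cc1t cc1t; reflexivity. Qed.
Lemma Fr0i w : peq RHH (winv (Fr 0) ++ w) (TTI :: w).
Proof. rewrite /Fr /= cc1t cc1t; reflexivity. Qed.
Lemma mvT' (j : int) w : peq RHH (SX j :: TT :: w) (TT :: SX (j + -1) :: w).
Proof.
rewrite (@mvT n m k hn) (_ : j + -1 + 1 = j); [reflexivity | lia].
Qed.

Lemma wsubst_rel4 X Y (f : X -> word Y) a b c :
  wsubst f [:: (a, true); (b, false); (a, false); (c, true)] = winv (f a) ++ f b ++ f a ++ winv (f c).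
Proof. by rewrite /wsubst /= cats0. Qed.

Lemma Fm_t0 : Fm (inr (zidx k 0)) = Fr 0.
Proof. exact: (@Fr_z 0 hk). Qed.

Lemma FrS s w : peq RHH (winv [:: SXI 0; TT; SX 0] ++ Fr s ++ [:: SXI 0; TT; SX 0] ++ w)
  (Fr s.+1 ++ w).
Proof.
rewrite /Fr /= -!catA /= cc1f.
rewrite -!catA /= cc1f nseq_swap; reflexivity.
Qed.

Lemma pwTsxi s (j : int) w : peq RHH (nseq s TT ++ SXI j :: w) (SXI (j + Posz s) :: nseq s TT ++ w).
Proof. have := pw1 (fun i w => @mvTi n m k hn i w) s j w; by rewrite mulr1. Qed.

Lemma pwTsxi0 s w : peq RHH (SXI 0 :: nseq s TT ++ w) (nseq s TT ++ SXI (0 - Posz s) :: w).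
Proof.
rewrite pwTsxi (_ : 0 - Posz s + Posz s = 0); [reflexivity | lia].
Qed.
Lemma HH3' w : peq RHH (SXI 0 :: SX (0 - Posz k) :: w) (SXI (0 - Posz k + Posz m) :: w).
Proof.
rewrite -(@HH3 n m k hn) (_ : 0 - Posz k + Posz k = 0); [reflexivity | lia].
Qed.
Lemma HH1' w : peq RHH (SXI (0 - Posz k) :: SX 0 :: w) (SX (0 - Posz k + Posz m) :: w).
Proof.
rewrite -(@HH1 n m k hn) (_ : 0 - Posz k + Posz k = 0); [reflexivity | lia].
Qed.

Lemma Frk w : peq RHH (Fr k ++ w) (SXI (A0 - 1) :: TT :: SX (A0 - 1) :: w).
Proof.
rewrite /Fr /= -!catA /= (@pwTi n m k hn) -catA /= pwTsxi0 -nseq_swap (nseq_ccT RHH).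
rewrite HH3' HH1' //.
rewrite (_ : 0 - Posz k + Posz m = A0 - 1); last by rewrite /a0; lia.
reflexivity.
Qed.

Lemma G2 r : RLG r -> peq RHH (wsubst Fm r) [::].
Proof.
case=> [[y | j] ->].
- rewrite wsubst_rel4.
  have -> : log_lam m (inl y : logV n k) = inr (zidx k 0) by [].
  have -> : log_iota (inl y : logV n k) = inl (zidx n (Posz y)) by rewrite zidx_val.
  have -> : log_tau (inl y : logV n k) = inl (zidx n (Posz y + 1)) by [].
  rewrite Fm_t0 !Fl_z Fr0i Fr0 /=.
  rewrite (@mvtii n m k hn) cc1t mvT'.
  rewrite (_ : A0 - Posz y + -1 = A0 - (Posz y + 1)); last lia.
  rewrite cc1f cc1f cc1t; reflexivity.
- rewrite wsubst_rel4.
  have -> : log_lam m (inr j : logV n k) = inl (zidx n A0) by [].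
  have -> : Fm (log_iota (inr j : logV n k)) = Fr j by [].
  rewrite Fl_z subrr FrS.
  rewrite /log_tau; case: ifP => hj.
  + rewrite (_ : Posz j + 1 = Posz j.+1); last lia.
    rewrite Fr_z //; exact: (inv_r RHH (Fr j.+1)).
  + have ej : j.+1 = k.
      have hjk : (j < k)%N by have h1 := ltn_ord j; have h2 := prednK hk; lia.
      move/negbT: hj; rewrite -leqNgt => hj; lia.
    rewrite Fl_z ej Frk; exact: (inv_r RHH [:: SXI (A0 - 1); TT; SX (A0 - 1)]).
Qed.
Lemma wsubst3 X Y (f : X -> word Y) a b :
  wsubst f [:: (a, true); (b, false); (a, false)] = winv (f a) ++ f b ++ f a.
Proof. by rewrite /wsubst /= cats0. Qed.

Lemma G3l (y : gidx n) : peq RLG (wsubst Gm (Fm (inl y))) [:: (inl y, false)].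
Proof.
rewrite /Fm wsubst3 Gm_z winv_cat winv_AK winv_nseq /= -(cats0 (nseq k T0I)).
rewrite -catA /= GC.
rewrite (_ : c0 - (A0 - Posz y) - Posz k - A0 + 1 = Posz y); last by rewrite /c0 /a0; lia.
rewrite /aa (zidx_val hn); reflexivity.
Qed.

Local Notation G0 := (Gm (Some (zidx n 0))).

Lemma M1 w : peq RLG (T0 :: G0 ++ w) (G0 ++ A A0 :: w).
Proof.
transitivity (G0 ++ winv G0 ++ T0 :: G0 ++ w).
  by rewrite catA inv_r; reflexivity.
rewrite Gm_z winv_cat winv_AK winv_nseq /= -!catA /= GC.
rewrite (_ : c0 - 0 - Posz k - A0 + 1 = A0); last by rewrite /c0 /a0; lia.
reflexivity.
Qed.

Lemma M2 w : peq RLG (T0I :: G0 ++ w) (G0 ++ AI A0 :: w).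
Proof.
symmetry; transitivity (T0I :: T0 :: G0 ++ AI A0 :: w).
  by rewrite cc1t; reflexivity.
rewrite M1 cc1f; reflexivity.
Qed.

Lemma wsubst_Fr j : wsubst Gm (Fr j) =
  winv G0 ++ nseq j T0I ++ G0 ++ T0 :: winv G0 ++ nseq j T0 ++ G0.
Proof.
rewrite /Fr wsubst_cons !wsubst_cat wsubst_nseqT wsubst_nseqF.
rewrite (_ : flatten (nseq j (winv (Gm None))) = nseq j T0I); last by elim: (j) => //= j0 ->.
rewrite (_ : flatten (nseq j (Gm None)) = nseq j T0); last by elim: (j) => //= j0 ->.
rewrite /wsubst /= !cats0 -!catA //.
Qed.

Lemma invl_w X (R : word X -> Prop) (u w : word X) : peq R (winv u ++ u ++ w) w.
Proof. rewrite catA inv_l; reflexivity. Qed.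

Lemma G3r (j : gidx k) : peq RLG (wsubst Gm (Fm (inr j))) [:: (inr j, false)].
Proof.
have -> : Fm (inr j) = Fr j by [].
rewrite wsubst_Fr (comm_blk M2) -(cats0 (nseq j T0 ++ G0)) -catA (comm_blk M1).
rewrite invl_w invl_w (@TJ n m k hn hk j [::]).
  by rewrite /tj (zidx_val hk); reflexivity.
have h1 := ltn_ord j; have h2 := prednK hk; lia.
Qed.

Lemma G3 v : peq RLG (wsubst Gm (Fm v)) [:: (v, false)].
Proof. case: v => [y | j]; [exact: G3l | exact: G3r]. Qed.

Lemma flatF s e w : peq RHH (flatten (nseq s [:: SXI e; TT; SX e]) ++ w) (SXI e :: nseq s TT ++ SX e :: w).
Proof.
elim: s w => [|s IH] w.
  by rewrite /= cc1t; reflexivity.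
rewrite /= IH cc1f; reflexivity.
Qed.

Lemma flatTi s w : peq RHH (flatten (nseq s (winv (Fr 0))) ++ w) (nseq s TTI ++ w).
Proof. rewrite (flat_peq (u := winv (Fr 0)) (v := [:: TTI]) Fr0i) flatten_nseq1; reflexivity. Qed.

Lemma G4 x : peq RHH (wsubst Fm (Gm x)) [:: (x, false)].
Proof.
case: x => [y |].
- rewrite /Gm wsubst_cat /AK /aa wsubst_nseqF -/(aa n k (c0 - Posz y)) Fl_z wsubst_nseqT.
  rewrite -/(t0 n k) Fm_t0 -(cats0 (flatten (nseq k (winv (Fr 0))))) flatTi flatF.
  rewrite (@pwT n m k hn) (nseq_ccF RHH) (@HH1 n m k hn).
  rewrite (_ : A0 - (c0 - Posz y) + Posz m = Posz y); last by rewrite /c0 /a0; lia.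
  rewrite /sx (zidx_val hn); reflexivity.
- rewrite /Gm wsubst1 -/(t0 n k) Fm_t0 -(cats0 (Fr 0)) Fr0; reflexivity.
Qed.

Lemma part2 : pres_iso RHH RLG.
Proof. exists Gm, Fm; split; [exact: G1 | exact: G2 | exact: G4 | exact: G3]. Qed.
End Part2.

End MP4.
Import MP4.

Local Close Scope ring_scope.

Theorem corollary3p4 (n m k p : nat) :
  (2 <= n)%N -> (1 <= m <= n)%N -> (1 <= k <= n)%N ->
  (p < n)%N -> (Posz p = Posz k - Posz m - 1 %[mod Posz n])%Z ->
  pres_iso (cyc_rel (H_word n m k)) (cyc_rel (L_word n (nseq k p))) /\
  pres_iso (hnn_rel (cyc_rel (H_word n m k)) (@cyc_shift n))
           (log_rel (@log_iota n k) (@log_tau n k) (@log_lam n m k)).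
Proof.
move=> h2 _ /andP[hk _] _ hp.
have hn : (0 < n)%N by apply: leq_trans h2.
split; [exact: (@part1 n m k p hn hp) | exact: (@part2 n m k hn hk)].
Qed.
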